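(* Let $n\ge2$, $A\in\mathbb{R}^{n\times m}$, $B\in\mathbb{R}^{m\times n}$, and let $C$ be a cycle in the DSR$^{[2]}$ graph $G^{[2]}_{A,B}$. (i) If $C$ is direct and $\pi(C)=\{W',W''\}$, then $P(C)=P(W')P(W'')$. (ii) If $C$ is twisted, then $P(C)=-P(\pi(C))$.
   Context: DSR graphs: for $A\in\mathbb{R}^{n\times m}$, $B\in\mathbb{R}^{m\times n}$, $G_{A,B}$ is the signed bipartite digraph with S-vertices $S_1,\dots,S_n$ and R-vertices $R_1,\dots,R_m$, an arc $R_j\to S_i$ of sign $\mathrm{sign}(A_{ij})$ iff $A_{ij}\ne0$, an arc $S_i\to R_j$ of sign $\mathrm{sign}(B_{ji})$ iff $B_{ji}\ne0$, with antiparallel arcs of equal sign merged into an undirected edge. Walks traverse edges consistently with orientation (empty walks allowed); the sign of a walk is the product of the signs of its edges with multiplicity (empty walk: $+1$); for a walk $W$ of even length, its parity is $P(W)=(-1)^{|W|/2}\mathrm{sign}(W)$, where $|W|$ is the number of edges with multiplicity. A cycle is a nonempty closed walk with no repeated vertex except first$=$last. DSR$^{[2]}$ graph: $\overline{\mathbf L}^A\in\mathbb{R}^{\binom n2\times mn}$ has rows indexed by $(i,j)$, $i<j$, columns by $(k,l)$, $1\le k\le m$, $1\le l\le n$, with entries $A_{jk}$ if $l=i$, $-A_{ik}$ if $l=j$, $0$ otherwise; $\underline{\mathbf L}^B\in\mathbb{R}^{mn\times\binom n2}$ has $(k,l),(i,j)$ entry $B_{kj}$ if $l=i$, $-B_{ki}$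 if $l=j$, $0$ otherwise. $G^{[2]}_{A,B}:=G_{\overline{\mathbf L}^A,\underline{\mathbf L}^B}$, with S-vertices written $ij=ji$ and R-vertices $k^l$; an edge $(ij,k^l)$ exists only if $l\in\{i,j\}$. The projection $\pi$ sends an edge $(ij,k^j)$ to the edge $(S_i,R_k)$ of $G_{A,B}$ (same direction). Direct/twisted and $\pi(C)$: let $C$ have S-vertex sequence $a_1b_1,\dots,a_{T+1}b_{T+1}=a_1b_1$, and write the segment from $a_rb_r$ to $a_{r+1}b_{r+1}$ as $(a_rb_r,k^l,a_{r+1}b_{r+1})$ with $l$ the common index; its projection is a length-2 walk from $S_x$ to $S_y$, where $x$ is the element of $\{a_r,b_r\}$ other than $l$ and $y$ that of $\{a_{r+1},b_{r+1}\}$ other than $l$. Starting from empty walks at $S_{a_1}$ and $S_{b_1}$, for $r=1,\dots,T$ append the projected segment to whichever current walk ends at $S_x$. If the final walks $W',W''$ are both closed, $C$ is direct and $\pi(C)=\{W',W''\}$; otherwise $W'$, $W''$ go from $S_{a_1}$ to $S_{b_1}$ and back respectively (or vice versa), $C$ is twisted, and $\pi(C)=W'\sqcup W''$ is the closed walk obtained by traversing them in succession. *)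

(* Defs.v *)
From HB Require Import structures.
From mathcomp Require Import all_boot all_order all_algebra.
Set Implicit Arguments. Unset Strict Implicit. Unset Printing Implicit Defensive.
Import Order.TTheory GRing.Theory Num.Theory.
Local Open Scope ring_scope.

(* Generic DSR graph on S-vertex index type IS and R-vertex index type *)
(* IR, given by a : IS -> IR -> R (a s r = entry "A_{s r}", arc R_r -> S_s)*)
(* and b : IR -> IS -> R (b r s = entry "B_{r s}", arc S_s -> R_r).       *)
(* Vertices: inl s = S_s, inr r = R_r.                                   *)
(* Merging antiparallel arcs of equal sign into an undirected edge does  *)
(* not change which oriented steps are allowed nor their signs, so walks *)
(* are vertex sequences whose consecutive steps are arcs.                *)
Notation vtx IS IR := (IS + IR)%type.

Section DSR.
Variables (R : realFieldType) (IS IR : finType).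
Variables (a : IS -> IR -> R) (b : IR -> IS -> R).

Definition dsr_w (u v : vtx IS IR) : R :=
  match u, v with
  | inl s, inr r => b r s
  | inr r, inl s => a s r
  | _, _ => 0
  end.

Definition dsr_arc : rel (vtx IS IR) := fun u v => dsr_w u v != 0.

(* a walk is given by its start x and the list p of subsequent vertices; *)
(* its length |W| is size p                                            *)
Definition is_walk (x : vtx IS IR) (p : seq (vtx IS IR)) := path dsr_arc x p.

Definition is_cycle (x : vtx IS IR) (p : seq (vtx IS IR)) :=
  [&& p != [::], path dsr_arc x p, last x p == x & uniq p].

Definition walk_sign (x : vtx IS IR) (p : seq (vtx IS IR)) : R :=
  \prod_(e <- zip (x :: p) p) Num.sg (dsr_w e.1 e.2).

Definition parity (x : vtx IS IR) (p : seq (vtx IS IR)) : R :=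
  (-1) ^+ (size p)./2 * walk_sign x p.
End DSR.

Definition parityAB (R : realFieldType) (n m : nat)
  (A : 'M[R]_(n, m)) (B : 'M[R]_(m, n)) :=
  parity (fun (i : 'I_n) (k : 'I_m) => A i k) (fun (k : 'I_m) (i : 'I_n) => B k i).

(* DSR^[2] graph.  S-vertices: pairs ij with i < j; R-vertices: k^l,    *)
(* encoded as (k, l) : 'I_m * 'I_n.                                     *)
Notation pair2 n := {p : 'I_n * 'I_n | (p.1 < p.2)%N}.

Definition Lbar (R : realFieldType) (n m : nat) (A : 'M[R]_(n, m))
  (s : pair2 n) (kl : 'I_m * 'I_n) : R :=
  let i := (val s).1 in let j := (val s).2 in
  if kl.2 == i then A j kl.1 else if kl.2 == j then - A i kl.1 else 0.

Definition Lunder (R : realFieldType) (n m : nat) (B : 'M[R]_(m, n))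
  (kl : 'I_m * 'I_n) (s : pair2 n) : R :=
  let i := (val s).1 in let j := (val s).2 in
  if kl.2 == i then B kl.1 j else if kl.2 == j then - B kl.1 i else 0.

Definition is_cycle2 (R : realFieldType) (n m : nat)
  (A : 'M[R]_(n, m)) (B : 'M[R]_(m, n)) :=
  is_cycle (@Lbar R n m A) (@Lunder R n m B).

Definition parity2 (R : realFieldType) (n m : nat)
  (A : 'M[R]_(n, m)) (B : 'M[R]_(m, n)) :=
  parity (@Lbar R n m A) (@Lunder R n m B).

Definition other (n : nat) (s : pair2 n) (l : 'I_n) : 'I_n :=
  if (val s).1 == l then (val s).2 else (val s).1.

Notation walkAB n m := (vtx 'I_n 'I_m * seq (vtx 'I_n 'I_m))%type.

Definition wend (n m : nat) (W : walkAB n m) := last W.1 W.2.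

(* Projection procedure: cur is the current S-vertex a_r b_r of C, p the *)
(* remaining vertices of C; each segment (a_r b_r, k^l, a_{r+1} b_{r+1})  *)
(* projects to S_x -> R_k -> S_y, appended to whichever current walk ends *)
(* at S_x.                                                              *)
Fixpoint proj_walks (n m : nat) (cur : pair2 n)
  (p : seq (vtx (pair2 n) ('I_m * 'I_n))) (W1 W2 : walkAB n m)
  : walkAB n m * walkAB n m :=
  match p with
  | inr kl :: inl s' :: p' =>
      let x := other cur kl.2 in
      let y := other s' kl.2 in
      let seg := [:: inr kl.1; inl y] in
      if wend W1 == inl x then proj_walks s' p' (W1.1, W1.2 ++ seg) W2
      else proj_walks s' p' W1 (W2.1, W2.2 ++ seg)
  | _ => (W1, W2)
  end.

Definition proj_pair (n m : nat) (s0 : pair2 n)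
  (p : seq (vtx (pair2 n) ('I_m * 'I_n))) : walkAB n m * walkAB n m :=
  proj_walks s0 p (inl (val s0).1, [::]) (inl (val s0).2, [::]).

Definition is_direct (n m : nat) (s0 : pair2 n)
  (p : seq (vtx (pair2 n) ('I_m * 'I_n))) : bool :=
  let W := proj_pair s0 p in
  (wend W.1 == W.1.1) && (wend W.2 == W.2.1).

Definition is_twisted (n m : nat) (s0 : pair2 n)
  (p : seq (vtx (pair2 n) ('I_m * 'I_n))) : bool := ~~ is_direct s0 p.

Definition walk_cat (n m : nat) (W1 W2 : walkAB n m) : walkAB n m :=
  (W1.1, W1.2 ++ W2.2).

(* Main.v *)
Require Import Defs.
From mathcomp Require Import all_boot all_order all_algebra.
From mathcomp Require Import zify ring.
Import GRing.Theory Num.Theory.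
Set Implicit Arguments. Unset Strict Implicit.
Local Open Scope ring_scope.

Section WS.
Variables (R : realFieldType) (IS IR : finType).
Variables (a : IS -> IR -> R) (b : IR -> IS -> R).

Lemma walk_sign_nil x : walk_sign a b x [::] = 1.
Proof. by rewrite /walk_sign /= big_nil. Qed.

Lemma walk_sign_cons x y p :
  walk_sign a b x (y :: p) = Num.sg (dsr_w a b x y) * walk_sign a b y p.
Proof. by rewrite /walk_sign /= big_cons. Qed.

Lemma walk_sign_cat x p q :
  walk_sign a b x (p ++ q) = walk_sign a b x p * walk_sign a b (last x p) q.
Proof.
elim: p x => [|y p IH] x /=; first by rewrite walk_sign_nil mul1r.
by rewrite !walk_sign_cons IH mulrA.
Qed.
End WS.

Section Main.
Variables (R : realFieldType) (n m : nat) (A : 'M[R]_(n, m)) (B : 'M[R]_(m, n)).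

Definition ws2 := walk_sign (@Lbar R n m A) (@Lunder R n m B).
Definition wsAB (W : walkAB n m) :=
  walk_sign (fun (i : 'I_n) (k : 'I_m) => A i k) (fun (k : 'I_m) (i : 'I_n) => B k i) W.1 W.2.
Definition sig (W : walkAB n m) (s : pair2 n) : R :=
  if wend W == inl (val s).1 then 1 else -1.
Definition inv (W1 W2 : walkAB n m) (s : pair2 n) :=
  (wend W1 == inl (val s).1) && (wend W2 == inl (val s).2) ||
  (wend W1 == inl (val s).2) && (wend W2 == inl (val s).1).

Lemma pair_neq (s : pair2 n) : ((val s).1 == (val s).2) = false.
Proof. by apply/negbTE/eqP => e; have := valP s; rewrite /= e ltnn. Qed.

Lemma Lunder_mem k l (s : pair2 n) : Lunder B (k, l) s != 0 ->
  (l == (val s).1) || (l == (val s).2).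
Proof. by rewrite /Lunder /=; case: ifP => // _; case: ifP => //; rewrite eqxx. Qed.

Lemma Lbar_mem k l (s : pair2 n) : Lbar A s (k, l) != 0 ->
  (l == (val s).1) || (l == (val s).2).
Proof. by rewrite /Lbar /=; case: ifP => // _; case: ifP => //; rewrite eqxx. Qed.

Lemma inl_eq (T1 T2 : eqType) (x y : T1) : (inl x == inl y :> T1 + T2) = (x == y).
Proof. by []. Qed.

Definition eps (s : pair2 n) (l : 'I_n) : R := if l == (val s).1 then 1 else -1.
Definition memp (s : pair2 n) (l : 'I_n) := (l == (val s).1) || (l == (val s).2).


Lemma F1 k l s : memp s l -> Num.sg (Lunder B (k, l) s) = eps s l * Num.sg (B k (other s l)).
Proof.
case: s => [[i j] /= hij]; have nij : (i == j) = false by apply/negbTE/eqP => e; move: hij; rewrite e ltnn.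
 rewrite /memp /eps /Lunder /other /= => /orP[]/eqP ->;
  rewrite ?eqxx ?nij ?(eq_sym j i) ?nij ?sgrN ?mul1r ?mulN1r //.
Qed.

Lemma F2 k l s : memp s l -> Num.sg (Lbar A s (k, l)) = eps s l * Num.sg (A (other s l) k).
Proof.
case: s => [[i j] /= hij]; have nij : (i == j) = false by apply/negbTE/eqP => e; move: hij; rewrite e ltnn.
 rewrite /memp /eps /Lbar /other /= => /orP[]/eqP ->;
  rewrite ?eqxx ?nij ?(eq_sym j i) ?nij ?sgrN ?mul1r ?mulN1r //.
Qed.

Lemma F3 l s (W W' : walkAB n m) : memp s l -> wend W = inl (other s l) -> inv W W' s ->
  sig W s = - eps s l /\ wend W' = inl l.
Proof.
case: s => [[i j] /= hij]; have nij : (i == j) = false by apply/negbTE/eqP => e; move: hij; rewrite e ltnn.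
 rewrite /memp /eps /sig /inv /other /= => /orP[]/eqP -> -> /=;
  rewrite ?inl_eq ?eqxx ?nij ?(eq_sym j i) ?nij ?inl_eq ?eqxx ?nij ?(eq_sym j i) ?nij /= ?orbF => /eqP -> //.
all: by rewrite opprK.
Qed.

Lemma F4 l s (W W' : walkAB n m) : memp s l -> inv W W' s ->
  (wend W == inl (other s l)) = false ->
  [/\ sig W s = eps s l, wend W = inl l & wend W' = inl (other s l)].
Proof.
case: s => [[i j] /= hij]; have nij : (i == j) = false by apply/negbTE/eqP => e; move: hij; rewrite e ltnn.
rewrite /memp /eps /sig /inv /other /= => /orP[]/eqP -> /orP[]/andP[/eqP -> /eqP ->];
  rewrite ?inl_eq ?eqxx ?nij ?(eq_sym j i) ?nij ?inl_eq ?eqxx ?nij ?(eq_sym j i) ?nij /= ?orbF ?andbT ?opprK //.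
Qed.

Lemma F5 l s (W W' : walkAB n m) : memp s l -> wend W = inl (other s l) -> wend W' = inl l ->
  inv W W' s /\ sig W s = - eps s l.
Proof.
case: s => [[i j] /= hij]; have nij : (i == j) = false by apply/negbTE/eqP => e; move: hij; rewrite e ltnn.
rewrite /memp /eps /sig /inv /other /= => /orP[]/eqP -> -> ->;
  rewrite ?inl_eq ?eqxx ?nij ?(eq_sym j i) ?nij ?inl_eq ?eqxx ?nij ?(eq_sym j i) ?nij /= ?orbF ?andbT ?opprK //.
Qed.

Lemma F6 l s (W W' : walkAB n m) : memp s l -> wend W = inl l -> wend W' = inl (other s l) ->
  inv W W' s /\ sig W s = eps s l.
Proof.
case: s => [[i j] /= hij]; have nij : (i == j) = false by apply/negbTE/eqP => e; move: hij; rewrite e ltnn.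
rewrite /memp /eps /sig /inv /other /= => /orP[]/eqP -> -> ->;
  rewrite ?inl_eq ?eqxx ?nij ?(eq_sym j i) ?nij ?inl_eq ?eqxx ?nij ?(eq_sym j i) ?nij /= ?orbF ?andbT ?opprK //.
Qed.

Lemma eps_pm s l : eps s l = 1 \/ eps s l = -1.
Proof. by rewrite /eps; case: ifP; auto. Qed.

Lemma proj_main (se : pair2 n) N : forall p cur (W1 W2 : walkAB n m),
  (size p <= N)%N ->
  path (dsr_arc (@Lbar R n m A) (@Lunder R n m B)) (inl cur) p ->
  last (inl cur) p = inl se -> inv W1 W2 cur ->
  [/\ (proj_walks cur p W1 W2).1.1 = W1.1, (proj_walks cur p W1 W2).2.1 = W2.1,
      inv (proj_walks cur p W1 W2).1 (proj_walks cur p W1 W2).2 se,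
      wsAB (proj_walks cur p W1 W2).1 * wsAB (proj_walks cur p W1 W2).2 =
        wsAB W1 * wsAB W2 * ws2 (inl cur) p * sig W1 cur * sig (proj_walks cur p W1 W2).1 se &
      exists t1 t2, [/\ size (proj_walks cur p W1 W2).1.2 = (size W1.2 + 2 * t1)%N,
         size (proj_walks cur p W1 W2).2.2 = (size W2.2 + 2 * t2)%N &
         size p = (2 * (t1 + t2))%N]].
Proof.
have nil_case : forall (cur : pair2 n) (W1 W2 : walkAB n m), inl cur = inl se :> vtx (pair2 n) ('I_m * 'I_n) -> inv W1 W2 cur ->
  [/\ W1.1 = W1.1, W2.1 = W2.1, inv W1 W2 se,
      wsAB W1 * wsAB W2 =
      wsAB W1 * wsAB W2 * ws2 (inl cur) [::] * sig W1 cur * sig W1 se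
    & exists t1 t2 : nat,
        [/\ size W1.2 = (size W1.2 + 2 * t1)%N,
            size W2.2 = (size W2.2 + 2 * t2)%N
          & 0%N = (2 * (t1 + t2))%N]].
  move=> cur W1 W2 e Hinv; have <- : cur = se by case: e.
  split => //; last by exists 0%N, 0%N; rewrite !addn0.
  rewrite /ws2 walk_sign_nil mulr1 -mulrA; rewrite /sig; case: ifP => _; ring.
elim: N => [|N IH] [|[s1|[k l]] [|[s'|kl'] p']] cur W1 W2 //= Hsz Hp Hl Hinv;
  try (exact: nil_case); try (by move: Hp; rewrite /dsr_arc /= eqxx).
2: by move: Hp => /andP[_ /andP[+ _]]; rewrite /dsr_arc /= ?eqxx.
move: Hp => /andP[a1 /andP[a2 Hp]].
have m1 : memp cur l by exact: Lunder_mem a1.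
have m2 : memp s' l by exact: Lbar_mem a2.
have Hsz' : (size p' <= N)%N by apply: ltnW.
have Ews : ws2 (inl cur) [:: inr (k,l), inl s' & p'] =
  Num.sg (Lunder B (k,l) cur) * (Num.sg (Lbar A s' (k,l)) * ws2 (inl s') p')
  by rewrite /ws2 !walk_sign_cons.
rewrite Ews F1 // F2 //.
set x := other cur l; set y := other s' l.
case E: (wend W1 == inl x) => /=.
- have [S1 e2] := F3 m1 (eqP E) Hinv.
  set W1n := (W1.1, W1.2 ++ [:: inr k; inl y]).
  have ew : wend W1n = inl y by rewrite /wend /= last_cat.
  have [I1 S1'] := F5 m2 ew e2.
  have [h1 h2 h3 h4 [t1 [t2 [z1 z2 z3]]]] := IH p' s' W1n W2 Hsz' Hp Hl I1.
  have wsn : wsAB W1n = wsAB W1 * (Num.sg (B k x) * Num.sg (A y k)).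
    rewrite /wsAB /= walk_sign_cat.
    have -> : last W1.1 W1.2 = inl x := eqP E.
    by rewrite !walk_sign_cons walk_sign_nil mulr1.
  split => //.
    rewrite h4 wsn S1 S1'.
    by case: (eps_pm cur l) => ->; case: (eps_pm s' l) => ->; ring.
  exists t1.+1, t2; rewrite z1 z2 z3 /W1n /= size_cat /=; split => //; lia.
- have [S1 e1 e2] := F4 m1 Hinv E.
  set W2n := (W2.1, W2.2 ++ [:: inr k; inl y]).
  have ew : wend W2n = inl y by rewrite /wend /= last_cat.
  have [I1 S1'] := F6 m2 e1 ew.
  have [h1 h2 h3 h4 [t1 [t2 [z1 z2 z3]]]] := IH p' s' W1 W2n Hsz' Hp Hl I1.
  have wsn : wsAB W2n = wsAB W2 * (Num.sg (B k x) * Num.sg (A y k)).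
    rewrite /wsAB /= walk_sign_cat.
    have -> : last W2.1 W2.2 = inl x := e2.
    by rewrite !walk_sign_cons walk_sign_nil mulr1.
  split => //.
    rewrite h4 wsn S1 S1'.
    by case: (eps_pm cur l) => ->; case: (eps_pm s' l) => ->; ring.
  exists t1, t2.+1; rewrite z1 z2 z3 /W2n /= size_cat /=; split => //; lia.
Qed.
End Main.

Theorem proposition5p3 (R : realFieldType) (n m : nat)
  (A : 'M[R]_(n, m)) (B : 'M[R]_(m, n))
  (s0 : pair2 n) (p : seq (vtx (pair2 n) ('I_m * 'I_n))) :
  (2 <= n)%N ->
  is_cycle2 A B (inl s0) p ->
  (is_direct s0 p ->
     parity2 A B (inl s0) p =
       parityAB A B (proj_pair s0 p).1.1 (proj_pair s0 p).1.2 *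
       parityAB A B (proj_pair s0 p).2.1 (proj_pair s0 p).2.2) /\
  (is_twisted s0 p ->
     parity2 A B (inl s0) p =
       - parityAB A B (walk_cat (proj_pair s0 p).1 (proj_pair s0 p).2).1
                      (walk_cat (proj_pair s0 p).1 (proj_pair s0 p).2).2).
Proof.
move=> _; rewrite /is_cycle2 /is_cycle => /and4P[_ Hp /eqP Hl _].
set W1 : walkAB n m := (inl (val s0).1, [::]).
set W2 : walkAB n m := (inl (val s0).2, [::]).
have Hinv : inv W1 W2 s0 by rewrite /inv /wend /= !eqxx.
have [h1 h2 h3 h4 [t1 [t2 [z1 z2 z3]]]] :=
  @proj_main R n m A B s0 (size p) p s0 W1 W2 (leqnn _) Hp Hl Hinv.
rewrite /is_twisted /is_direct /proj_pair -/W1 -/W2.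
set P := proj_walks s0 p W1 W2 in h1 h2 h3 h4 z1 z2 *.
have eP : parity2 A B (inl s0) p = (-1) ^+ (t1 + t2) * ws2 A B (inl s0) p.
  by rewrite /parity2 /parity z3 mul2n doubleK.
have ePA : forall (W : walkAB n m) t, size W.2 = (2 * t)%N ->
  parityAB A B W.1 W.2 = (-1) ^+ t * wsAB A B W.
  by move=> W t e; rewrite /parityAB /parity e mul2n doubleK.
have w0 : wsAB A B W1 = 1 /\ wsAB A B W2 = 1 by rewrite /wsAB !walk_sign_nil.
have s1 : sig R W1 s0 = 1 by rewrite /sig /wend /= eqxx.
move: z1 z2; rewrite /= !add0n => z1 z2.
move: h4; rewrite (proj1 w0) (proj2 w0) s1 !mul1r mulr1 => h4.
split.
- move=> /andP[/eqP d1 _].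
  have sP : sig R P.1 s0 = 1 by rewrite /sig d1 h1 /= eqxx.
  rewrite eP (ePA _ t1 z1) (ePA _ t2 z2) mulrACA h4 sP exprD; ring.
- move=> nd.
  have [e1 e2] : wend P.1 = inl (val s0).2 /\ wend P.2 = inl (val s0).1.
    move: h3 nd; rewrite /inv h1 h2 /=.
    by case/orP => /andP[/eqP -> /eqP ->] //; rewrite !eqxx.
  have sP : sig R P.1 s0 = -1 by rewrite /sig e1 inl_eq eq_sym pair_neq.
  have ws : wsAB A B (walk_cat P.1 P.2) = wsAB A B P.1 * wsAB A B P.2.
    rewrite /wsAB /walk_cat /= walk_sign_cat.
    have -> : last P.1.1 P.1.2 = P.2.1 by rewrite h2; exact: e1.
    by [].
  rewrite eP (ePA (walk_cat P.1 P.2) (t1 + t2)%N); last by rewrite /walk_cat /= size_cat z1 z2; lia.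
  rewrite ws h4 sP; ring.
Qed.
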